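(* Let $\Bbbk$ be any (commutative unital) ring, let $r\ge1$ and $d>r+1$ be integers, and let $\alpha(d,r)=(d-r,1^r)$. For every partition $\lambda$ of $d$ with $\lambda\trianglerighteq\alpha(d,r)$ there is an embedding $M^\lambda\subseteq M^{\alpha(d,r)}$ of left $\Bbbk W_d$-modules.
   Context: $W_d$ is the symmetric group on $\{1,\dots,d\}$; for a partition (or weak composition) $\lambda$ of $d$, $W_\lambda$ is the Young subgroup stabilising the rows of the tableau obtained by writing $1,\dots,d$ left to right along the rows of the Young diagram of $\lambda$, and $M^\lambda=\Bbbk W_d\otimes_{\Bbbk W_\lambda}\Bbbk$ is the permutation module. $\trianglerighteq$ is the dominance order on partitions. *)

(* Defs.v *)
From HB Require Import structures.
From mathcomp Require Import all_boot all_order all_algebra all_fingroup.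
Set Implicit Arguments. Unset Strict Implicit. Unset Printing Implicit Defensive.
Import GRing.Theory.

(* W_d is 'S_d = {perm 'I_d} (positions 0..d-1 instead of 1..d). *)

Definition is_partition (d : nat) (lam : seq nat) : Prop :=
  [/\ sorted geq lam, all (fun p => 0 < p) lam & sumn lam = d].

Definition dominates (lam mu : seq nat) : Prop :=
  forall i : nat, \sum_(j < i) nth 0 mu j <= \sum_(j < i) nth 0 lam j.

Definition alpha (d r : nat) : seq nat := (d - r) :: nseq r 1.

(* Row (0-indexed) of the tableau of shape lam containing position i,
   when 0..d-1 are written left to right along the rows. *)
Definition rowof (lam : seq nat) (i : nat) : nat :=
  count (fun j => \sum_(k < j.+1) nth 0 lam k <= i) (iota 0 (size lam)).

Definition young (d : nat) (lam : seq nat) : {set 'S_d} :=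
  [set s : 'S_d | [forall i : 'I_d, rowof lam (s i) == rowof lam i]].

(* Permutation module M^lam = k W_d ⊗_{k W_lam} k, realised as the free
   k-module on the left cosets x W_lam, i.e. as the functions W_d -> k that are
   constant on left cosets of W_lam, with W_d acting by left translation. *)
Definition inM (k : comPzRingType) (d : nat) (lam : seq nat)
  (f : {ffun 'S_d -> k}) : Prop :=
  forall (x h : 'S_d), h \in young d lam -> f (x * h)%g = f x.

Definition actM (k : comPzRingType) (d : nat) (g : 'S_d)
  (f : {ffun 'S_d -> k}) : {ffun 'S_d -> k} :=
  [ffun x => f (g^-1 * x)%g].

Definition addM (k : comPzRingType) (d : nat) (f1 f2 : {ffun 'S_d -> k})
  : {ffun 'S_d -> k} := [ffun x => (f1 x + f2 x)%R].

Definition scaleM (k : comPzRingType) (d : nat) (a : k) (f : {ffun 'S_d -> k})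
  : {ffun 'S_d -> k} := [ffun x => (a * f x)%R].

Definition is_embedding (k : comPzRingType) (d : nat) (lam mu : seq nat)
  (phi : {ffun 'S_d -> k} -> {ffun 'S_d -> k}) : Prop :=
  [/\ (forall f, inM lam f -> inM mu (phi f)),
      (forall f1 f2, inM lam f1 -> inM lam f2 ->
          phi (addM f1 f2) = addM (phi f1) (phi f2)),
      (forall a f, inM lam f -> phi (scaleM a f) = scaleM a (phi f)),
      (forall g f, inM lam f -> phi (actM g f) = actM g (phi f))
    & (forall f1 f2, inM lam f1 -> inM lam f2 -> phi f1 = phi f2 -> f1 = f2)].

(* Main.v *)
Require Import Defs.
From mathcomp Require Import all_boot all_order all_algebra all_fingroup.
From mathcomp Require Import zify.

Lemma count_lt_iota (m n : nat) : count (fun j => j < m) (iota 0 n) = minn m n.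
Proof.
elim: n => [|n IH]; first by rewrite minn0.
rewrite -addn1 iotaD count_cat IH /= add0n addn0.
case: ltnP => H; lia.
Qed.

Lemma alpha_prefix d r j : j <= r ->
  \sum_(k < j.+1) nth 0 (alpha d r) k = d - r + j.
Proof.
elim: j => [|j IH] Hj; first by rewrite big_ord1 addn0.
rewrite big_ord_recr /= IH; last by lia.
rewrite nth_nseq; case: ifP => H; lia.
Qed.

Lemma rowof_alpha d r i : rowof (alpha d r) i = minn (i.+1 - (d - r)) r.+1.
Proof.
rewrite /rowof (_ : size (alpha d r) = r.+1); last by rewrite /= size_nseq.
rewrite -count_lt_iota.
apply: eq_in_count => j; rewrite mem_iota add0n => /andP [_ Hj].
rewrite alpha_prefix; last by lia.
apply/idP/idP => /= H; lia.
Qed.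

Lemma rowof_small (lam : seq nat) x : 0 < size lam -> x < nth 0 lam 0 -> rowof lam x = 0.
Proof.
move=> Hs Hx; rewrite /rowof; apply/eqP; rewrite -leqn0 leqNgt -has_count.
apply/hasPn => j _ /=; rewrite -ltnNge big_ord_recl /=.
exact: (leq_trans Hx (leq_addr _ _)).
Qed.

Theorem proposition7p4 (k : comPzRingType) (d r : nat) (lam : seq nat) :
  (1 <= r)%N -> (r.+1 < d)%N ->
  is_partition d lam -> dominates lam (alpha d r) ->
  exists phi : {ffun 'S_d -> k} -> {ffun 'S_d -> k},
    is_embedding lam (alpha d r) phi.
Proof.
move=> Hr Hd [_ Hpos Hsum] Hdom.
have H0 : d - r <= nth 0 lam 0.
  by have := Hdom 1; rewrite !big_ord1.
have Hs : 0 < size lam.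
  case: lam Hsum H0 {Hpos Hdom} => [|a l] //= E H; lia.
have Hsub : forall h, h \in young d (alpha d r) -> h \in young d lam.
  move=> h; rewrite !inE => /forallP Hh; apply/forallP => i.
  have := Hh i; rewrite !rowof_alpha => /eqP E.
  have Hi := ltn_ord i; have Hhi := ltn_ord (h i).
  case: (ltnP i (d - r)) => Hi2.
    have Hh2 : h i < d - r by lia.
    rewrite !rowof_small //; lia.
  have -> : h i = i :> nat by lia.
  by [].
exists id; split => //.
move=> f Hf x h Hh; exact: Hf (Hsub h Hh).
Qed.
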